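(* Let $\mathcal{P}$ be a finite nonempty set and $\mathcal{N}$ a finite set of stochastic trees. If there exists an LPTS with $k$ states that is consistent with $\mathcal{P}$ and $\mathcal{N}$, then there is a consistent partition of $S_\mathcal{P}$ with at most $2^k$ classes.
   Context: An LPTS is a tuple $\langle S,s^0,\alpha,\tau\rangle$ with finite state set $S$, start state $s^0$, finite action set $\alpha$, finite $\tau\subseteq S\times\alpha\times\mathrm{Dist}(S)$, where $\mathrm{Dist}(S)$ is the set of discrete probability distributions over $S$ (rational probabilities); write $s\xrightarrow{a}\mu$. A stochastic tree is an LPTS whose start state is in the support of no transition's distribution and every other state is in the support of exactly one transition's distribution. Strong simulation: for $\mu_1\in\mathrm{Dist}(S_1)$, $\mu_2\in\mathrm{Dist}(S_2)$, $R\subseteq S_1\times S_2$, $\mu_1\sqsubseteq_R\mu_2$ iff there is $w:S_1\times S_2\to\mathbb{Q}\cap[0,1]$ with $\sum_{s_2}w(s_1,s_2)=\mu_1(s_1)$, $\sum_{s_1}w(s_1,s_2)=\mu_2(s_2)$ and $w(s_1,s_2)>0\Rightarrow s_1Rs_2$; $R$ is a strong simulation iff $s_1Rs_2$ and $s_1\xrightarrow{a}\mu_1$ imply some $s_2\xrightarrow{a}\mu_2$ with $\mu_1\sqsubseteq_R\mu_2$; $L_1\preceq L_2$ iff a strong simulation relates the start states. An LPTS $L$ is consistent with $\mathcal{P},\mathcal{N}$ iff $P\preceq L$ for all $P\in\mathcal{P}$ and $N\not\preceq L$ for all $N\in\mathcal{N}$. $S_\mathcal{P}$ is the (disjoint)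 union of the state sets of the trees in $\mathcal{P}$. For a partition $\Pi$ of $S_\mathcal{P}$ with classes $E_\Pi$ and class $[s]$ of $s$, in which all start states of trees in $\mathcal{P}$ lie in one class, the quotient $\mathcal{P}/\Pi$ is the LPTS with states $E_\Pi$, start state that common class, actions $\bigcup_{P\in\mathcal{P}}\alpha_P$, and a transition $e\xrightarrow{a}\mu$ iff some $P\in\mathcal{P}$ has $s\xrightarrow{a}\mu_p$ with $[s]=e$ and $\mu(e')=\sum_{s'\in e'}\mu_p(s')$ for all $e'$. Such a partition $\Pi$ is consistent iff $N\not\preceq\mathcal{P}/\Pi$ for every $N\in\mathcal{N}$; its size is the number of classes. *)

(* Defs.v *)
From HB Require Import structures.
From mathcomp Require Import all_boot all_order all_algebra.
Set Implicit Arguments. Unset Strict Implicit. Unset Printing Implicit Defensive.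
Import Order.TTheory GRing.Theory Num.Theory.
Local Open Scope ring_scope.

Record lpts (Act : eqType) := LPTS {
  st : finType;
  start : st;
  alpha : seq Act;
  trans : seq (st * Act * {ffun st -> rat})
}.

Definition is_dist (S : finType) (mu : {ffun S -> rat}) : Prop :=
  (forall s, 0 <= mu s) /\ \sum_(s : S) mu s = 1.

(** Well-formedness: tau is a (duplicate-free) finite subset of S x alpha x Dist(S). *)
Definition is_lpts (Act : eqType) (L : lpts Act) : Prop :=
  uniq (trans L) /\
  (forall t, t \in trans L -> t.1.2 \in alpha L /\ is_dist t.2).

Definition stochastic_tree (Act : eqType) (L : lpts Act) : Prop :=
  is_lpts L /\
  (forall t, t \in trans L -> ~~ (0 < t.2 (start L))) /\
  (forall s, s != start L -> count (fun t : st L * Act * {ffun st L -> rat} => 0 < t.2 s) (trans L) = 1%N).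

Definition lift_rel (S1 S2 : finType) (R : S1 -> S2 -> Prop)
    (mu1 : {ffun S1 -> rat}) (mu2 : {ffun S2 -> rat}) : Prop :=
  exists w : {ffun S1 * S2 -> rat},
    (forall p, 0 <= w p <= 1) /\
    (forall s1, \sum_(s2 : S2) w (s1, s2) = mu1 s1) /\
    (forall s2, \sum_(s1 : S1) w (s1, s2) = mu2 s2) /\
    (forall s1 s2, 0 < w (s1, s2) -> R s1 s2).

Definition strong_simulation (Act : eqType) (L1 L2 : lpts Act)
    (R : st L1 -> st L2 -> Prop) : Prop :=
  forall s1 s2 a mu1, R s1 s2 -> (s1, a, mu1) \in trans L1 ->
    exists2 mu2, (s2, a, mu2) \in trans L2 & lift_rel R mu1 mu2.

Definition simulated (Act : eqType) (L1 L2 : lpts Act) : Prop :=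
  exists R : st L1 -> st L2 -> Prop,
    strong_simulation R /\ R (start L1) (start L2).

(** Consistency with positive examples P (indexed by 'I_n.+1, hence nonempty)
    and negative examples N. *)
Definition consistent (Act : eqType) (n m : nat)
    (P : 'I_n.+1 -> lpts Act) (N : 'I_m -> lpts Act) (L : lpts Act) : Prop :=
  (forall i, simulated (P i) L) /\ (forall j, ~ simulated (N j) L).

Definition SP (Act : eqType) (n : nat) (P : 'I_n.+1 -> lpts Act) : finType :=
  {i : 'I_n.+1 & st (P i)}.

Definition inSP (Act : eqType) (n : nat) (P : 'I_n.+1 -> lpts Act)
    (i : 'I_n.+1) (s : st (P i)) : SP P := Tagged (fun i => st (P i)) s.

(** A partition of S_P into c classes is represented by a surjective
    class-labelling function [cls : SP P -> 'I_c] (class of s = cls s). *)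
Definition partition_of (Act : eqType) (n : nat) (P : 'I_n.+1 -> lpts Act)
    (c : nat) (cls : SP P -> 'I_c) : Prop :=
  (forall e : 'I_c, exists s, cls s = e) /\
  (forall i j : 'I_n.+1, cls (inSP (start (P i))) = cls (inSP (start (P j)))).

Section Quotient.
Variables (Act : eqType) (n : nat) (P : 'I_n.+1 -> lpts Act) (c : nat)
          (cls : SP P -> 'I_c).

Definition qdist (i : 'I_n.+1) (mu : {ffun st (P i) -> rat}) : {ffun 'I_c -> rat} :=
  [ffun e => \sum_(s' : st (P i) | cls (inSP s') == e) mu s'].

(** The quotient P/Pi. The start state is the class of the start state of
    the first tree (all start states lie in one class by [partition_of]). *)
Definition quotient : lpts Act :=
  @LPTS Act 'I_c
    (cls (inSP (start (P ord0))))
    (undup (flatten [seq alpha (P i) | i <- enum 'I_n.+1]))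
    (undup (flatten [seq [seq (cls (inSP t.1.1), t.1.2, qdist t.2) | t <- trans (P i)]
                    | i <- enum 'I_n.+1])).
End Quotient.

Definition consistent_partition (Act : eqType) (n m : nat)
    (P : 'I_n.+1 -> lpts Act) (N : 'I_m -> lpts Act)
    (c : nat) (cls : SP P -> 'I_c) : Prop :=
  forall j, ~ simulated (N j) (quotient cls).

(* Main.v *)
Require Import Defs.
From HB Require Import structures.
From mathcomp Require Import all_boot all_order all_algebra.
From Stdlib Require Import ClassicalEpsilon.
Import Order.TTheory GRing.Theory Num.Theory.
Local Open Scope ring_scope.

Lemma term_le_sum (S : finType) (F : S -> rat) x :
  (forall y, 0 <= F y) -> F x <= \sum_y F y.
Proof. by move=> h; rewrite (bigD1 x) //= lerDl sumr_ge0. Qed.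

Lemma dist_le1 (S : finType) (mu : {ffun S -> rat}) x : is_dist mu -> mu x <= 1.
Proof. by case=> h1 h2; rewrite -h2 term_le_sum. Qed.

Lemma pos_sum_term (S : finType) (P : pred S) (F : S -> rat) :
  0 < \sum_(y | P y) F y -> exists y, P y /\ 0 < F y.
Proof.
move=> h; case: (pickP (fun y => P y && (0 < F y))) => [y /andP[]|H].
  by exists y.
suff: \sum_(y | P y) F y <= 0 by rewrite leNgt h.
apply: sumr_le0 => i Pi; have := H i; rewrite Pi /= => /negbT; by rewrite -leNgt.
Qed.

Lemma lift_comp (S1 S2 S3 : finType) (R1 : S1 -> S2 -> Prop) (R2 : S2 -> S3 -> Prop)
  mu1 mu2 mu3 : is_dist mu1 -> lift_rel R1 mu1 mu2 -> lift_rel R2 mu2 mu3 ->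
  lift_rel (fun a c => exists b, R1 a b /\ R2 b c) mu1 mu3.
Proof.
move=> d1 [w1 [b1 [r1 [c1 p1]]]] [w2 [b2 [r2 [c2 p2]]]].
have w1ge a b : 0 <= w1 (a, b) by case/andP: (b1 (a, b)).
have w2ge a b : 0 <= w2 (a, b) by case/andP: (b2 (a, b)).
have mu2ge b : 0 <= mu2 b by rewrite -c1 sumr_ge0.
have z1 a b : mu2 b = 0 -> w1 (a, b) = 0.
  by move=> h; apply: (psumr_eq0P (P := predT) (F := fun a => w1 (a, b))) => //; rewrite c1.
have z2 b c : mu2 b = 0 -> w2 (b, c) = 0.
  by move=> h; apply: (psumr_eq0P (P := predT) (F := fun c => w2 (b, c))) => //; rewrite r2.
pose w := [ffun p : S1 * S3 => \sum_(b : S2) w1 (p.1, b) * w2 (b, p.2) / mu2 b].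
have wge p : 0 <= w p.
  by rewrite ffunE sumr_ge0 // => b _; rewrite !mulr_ge0 // invr_ge0.
have rw a : \sum_c w (a, c) = mu1 a.
  under eq_bigr do rewrite ffunE /=.
  rewrite exchange_big /= -r1; apply: eq_bigr => b _.
  under eq_bigr do rewrite mulrAC.
  rewrite -mulr_sumr r2.
  case: (eqVneq (mu2 b) 0) => [h|h]; first by rewrite z1 // !mul0r.
  by rewrite divfK.
exists w; split; last split; last split.
- move=> p; rewrite wge /=; case: p => a c.
  rewrite (le_trans _ (@dist_le1 _ _ a d1)) // -rw; apply: (@term_le_sum _ (fun c => w (a, c)) c) => y; exact: wge. 
- exact: rw.
- move=> c; under eq_bigr do rewrite ffunE /=.
  rewrite exchange_big /= -c2; apply: eq_bigr => b _.
  rewrite -mulr_suml -mulr_suml c1.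
  case: (eqVneq (mu2 b) 0) => [h|h]; first by rewrite z2 // mulr0 mul0r.
  by rewrite mulrC mulrA mulVf ?mul1r.
- move=> a c; rewrite ffunE /= => /pos_sum_term [b [_ h]].
  exists b; split.
    apply: p1; rewrite lt0r w1ge andbT; apply/eqP => e.
    by move: h; rewrite e !mul0r ltxx.
  apply: p2; rewrite lt0r w2ge andbT; apply/eqP => e.
  by move: h; rewrite e mulr0 mul0r ltxx.
Qed.

Lemma sim_trans (Act : eqType) (L1 L2 L3 : lpts Act) :
  is_lpts L1 -> simulated L1 L2 -> simulated L2 L3 -> simulated L1 L3.
Proof.
move=> [_ hl] [R1 [s1 h1]] [R2 [s2 h2]].
exists (fun a c => exists b, R1 a b /\ R2 b c); split; last by exists (start L2).
move=> x z a mu1 [y [xy yz]] tr.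
have [mu2 tr2 l12] := s1 _ _ _ _ xy tr.
have [mu3 tr3 l23] := s2 _ _ _ _ yz tr2.
exists mu3 => //; apply: lift_comp l12 l23.
by have [] := hl _ tr.
Qed.

Definition Sim (Act : eqType) (A B : lpts Act) (x : st A) (q : st B) : Prop :=
  exists R, @strong_simulation Act A B R /\ R x q.
Definition pb (P : Prop) : bool := if excluded_middle_informative P then true else false.
Lemma pbP P : reflect P (pb P).
Proof. by rewrite /pb; case: excluded_middle_informative => h; constructor. Qed.

Definition classOf (Act : eqType) n (P : 'I_n.+1 -> lpts Act) (L : lpts Act)
  (s : SP P) : {set st L} :=
  if tagged s == start (P (tag s)) then [set start L]
  else [set q | pb (@Sim _ _ L (tagged s) q)].

Lemma quotient_sim (Act : eqType) n (P : 'I_n.+1 -> lpts Act) (L : lpts Act)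
  c (cls : SP P -> 'I_c) (val : 'I_c -> {set st L}) :
  (forall i, stochastic_tree (P i)) -> is_lpts L ->
  (forall i, simulated (P i) L) ->
  (forall s, val (cls s) = @classOf _ _ _ L s) ->
  simulated (quotient cls) L.
Proof.
move=> Ptree Ll Psim hval.
exists (fun e q => q \in val e); split; last first.
  by rewrite /= hval /classOf /= eqxx set11.
move=> e q a mu Hq /=; rewrite mem_undup => /flatten_mapP [i _ /mapP [[[x a'] mu'] ht]].
case=> he ha hmu; subst e a mu.
move: Hq; rewrite hval /classOf /= => Hq.
have hS : @Sim _ _ L x q.
  move: Hq; case: (eqVneq x (start (P i))) => [-> | _].
    rewrite inE => /eqP ->; have [R [sR hR]] := Psim i; by exists R.
  by rewrite inE => /pbP.
case: hS => R [sR xq].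
have [mu2 tr2 [w [wb [wr [wc wp]]]]] := sR _ _ _ _ xq ht.
have wge p : 0 <= w p by case/andP: (wb p).
pose w' := [ffun p : 'I_c * st L =>
   \sum_(s' : st (P i) | cls (inSP s') == p.1) w (s', p.2)].
have colsum q' : \sum_e' w' (e', q') = mu2 q'.
  under eq_bigr do rewrite ffunE /=.
  rewrite -wc (partition_big (fun s' => cls (inSP s')) predT) //.
exists mu2 => //; exists w'; split; last split; last split.
- case=> e' q'; apply/andP; split; first by rewrite ffunE sumr_ge0.
  have d2 : is_dist mu2 by have [] := (Ll.2 _ tr2).
  apply: (le_trans _ (@dist_le1 _ _ q' d2)).
  rewrite -colsum.
  by apply: (@term_le_sum _ (fun e' => w' (e', q')) e') => y; rewrite ffunE sumr_ge0.
- move=> e'; rewrite ffunE.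
  under eq_bigr do rewrite ffunE /=.
  rewrite exchange_big /=; apply: eq_bigr => s' _; exact: wr.
- exact: colsum.
- move=> e' q'; rewrite ffunE /= => /pos_sum_term [s' [/eqP <- hpos]].
  rewrite hval /classOf /=.
  case: (eqVneq s' (start (P i))) => [es | _]; last by rewrite inE; apply/pbP; exists R; split => //; exact: wp.
  exfalso.
  have [_ [ns _]] := Ptree i.
  have := ns _ ht; rewrite /= -es -wr => /negP; apply.
  apply: (lt_le_trans hpos).
  by apply: (@term_le_sum _ (fun q => w (s', q)) q') => y.
Qed.

Theorem corollary1 (Act : eqType) (n m : nat)
    (P : 'I_n.+1 -> lpts Act) (N : 'I_m -> lpts Act) (k : nat) :
  (forall i, stochastic_tree (P i)) ->
  (forall j, stochastic_tree (N j)) ->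
  (exists L : lpts Act, is_lpts L /\ #|st L| = k /\ consistent P N L) ->
  exists (c : nat) (cls : SP P -> 'I_c),
    partition_of cls /\ consistent_partition N cls /\ (c <= 2 ^ k)%N.
Proof.
move=> Ptree Ntree [L [Ll [card [Psim Nsim]]]].
pose cO := @classOf _ _ P L.
pose I := [set cO s | s in [set: SP P]].
pose s0 := inSP (start (P ord0)).
have H0 : cO s0 \in I by apply: imset_f.
pose cls := fun s => enum_rank_in H0 (cO s).
have hval s : enum_val (cls s) = cO s by rewrite /cls enum_rankK_in // imset_f.
exists #|I|, cls; split; last split.
- split.
    move=> e; have := enum_valP e; case/imsetP => s _ hs.
    by exists s; rewrite /cls -hs enum_valK_in.
  have hs i : cO (inSP (start (P i))) = [set start L] by rewrite /cO /classOf /= eqxx.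
  by move=> i j; rewrite /cls !hs.
- move=> j hN; apply: (Nsim j).
  have hq := @quotient_sim _ _ P L _ cls enum_val Ptree Ll Psim hval.
  have hl : is_lpts (N j) by have [] := Ntree j.
  exact: (@sim_trans _ _ _ _ hl hN hq).
- rewrite -card; apply: leq_trans (subset_leq_card (_ : I \subset powerset setT)) _.
    by apply/subsetP => X _; rewrite powersetE subsetT.
  by rewrite card_powerset cardsT.
Qed.
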